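(* Let $R$ be a ring and $J\subseteq J(R)$ an ideal of $R$ such that idempotents lift modulo $J$. Then the following are equivalent: (1) $R$ is an abelian ring; (2) $R/J$ is an abelian ring and idempotents lift uniquely modulo $J$.
   Context: All rings are associative with identity; $J(R)$ is the Jacobson radical. A ring is abelian if all its idempotents are central. Idempotents lift modulo an ideal $J$ if for every $a\in R$ with $a^2-a\in J$ there exists an idempotent $e\in R$ with $e-a\in J$; they lift uniquely modulo $J$ if this idempotent $e$ is uniquely determined by $a$. *)

(* Defs.v *)
From HB Require Import structures.
From mathcomp Require Import all_boot all_algebra.
Set Implicit Arguments. Unset Strict Implicit. Unset Printing Implicit Defensive.
Import GRing.Theory.
Local Open Scope ring_scope.

Definition left_ideal (R : pzRingType) (I : R -> Prop) : Prop :=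
  [/\ I 0, (forall x y, I x -> I y -> I (x - y)) &
      (forall r x, I x -> I (r * x))].

Definition ideal (R : pzRingType) (I : R -> Prop) : Prop :=
  [/\ I 0, (forall x y, I x -> I y -> I (x - y)),
      (forall r x, I x -> I (r * x)) &
      (forall r x, I x -> I (x * r))].

Definition maximal_left_ideal (R : pzRingType) (M : R -> Prop) : Prop :=
  [/\ left_ideal M, ~ M 1 &
      (forall N : R -> Prop, left_ideal N -> ~ N 1 ->
         (forall x, M x -> N x) -> forall x, N x -> M x)].

Definition jacobson (R : pzRingType) (x : R) : Prop :=
  forall M : R -> Prop, maximal_left_ideal M -> M x.

Definition idempotent (R : pzRingType) (e : R) : Prop := e * e = e.

Definition abelian_ring (R : pzRingType) : Prop :=
  forall e : R, idempotent e -> forall r : R, e * r = r * e.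

(* R/J is abelian, written out on representatives: the idempotents of R/J are
   the classes a + J with a^2 - a in J, and such a class is central iff
   a r - r a in J for all r. *)
Definition abelian_mod (R : pzRingType) (J : R -> Prop) : Prop :=
  forall a : R, J (a * a - a) -> forall r : R, J (a * r - r * a).

Definition idempotents_lift (R : pzRingType) (J : R -> Prop) : Prop :=
  forall a : R, J (a * a - a) -> exists e : R, idempotent e /\ J (e - a).

Definition idempotents_lift_uniquely (R : pzRingType) (J : R -> Prop) : Prop :=
  forall a : R, J (a * a - a) -> exists! e : R, idempotent e /\ J (e - a).

(* Main.v *)
Require Import Defs.
From mathcomp Require Import all_boot all_algebra.
From mathcomp Require Import boolp classical_sets.
Import GRing.Theory.
Local Open Scope classical_set_scope.
Local Open Scope ring_scope.

Lemma jac_idem0 (R : pzRingType) (g : R) : jacobson g -> g * g = g -> g = 0.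
Proof.
move=> Jg gg; apply: contrapT => g0.
pose P (X : set R) := [/\ (forall x y, X x -> X y -> X (x - y)),
  (forall r x, X x -> X (r * x)), ~ X 1 & (forall x, X x -> X (1 - g))].
have PU : forall F : set (set R), F `<=` P -> total_on F subset ->
    P (\bigcup_(X in F) X).
  move=> F FP tot; split.
  - move=> x y [X FX Xx] [Y FY Yy].
    have [XY|YX] := tot _ _ FX FY.
    + exists Y => //; have [h _ _ _] := FP _ FY; exact: h (XY _ Xx) Yy.
    + exists X => //; have [h _ _ _] := FP _ FX; exact: h Xx (YX _ Yy).
  - move=> r x [X FX Xx]; exists X => //; have [_ h _ _] := FP _ FX; exact: h.
  - move=> [X FX X1]; have [_ _ h _] := FP _ FX; exact: h.
  - move=> x [X FX Xx]; exists X => //; have [_ _ _ h] := FP _ FX; exact: h Xx.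
have [A [PA Amax]] := Zorn_bigcup PU.
have [Asub Amul A1 Ag] := PA.
have B1 : ~ (exists r : R, 1 = r * (1 - g)).
  move=> [r r1]; apply: g0.
  by rewrite -[g]mul1r r1 -mulrA mulrBl mul1r gg subrr mulr0.
have A1g : A (1 - g).
  apply: contrapT => nA.
  have Aempty : forall x, ~ A x by move=> x /Ag.
  apply: (Amax (fun x => exists r, x = r * (1 - g))).
  - split; first by move=> x /Aempty.
    by move=> sub; apply: (Aempty 0); apply: sub; exists 0; rewrite mul0r.
  - split.
    + by move=> _ _ [r ->] [s ->]; exists (r - s); rewrite mulrBl.
    + by move=> t _ [r ->]; exists (t * r); rewrite mulrA.
    + by move=> [r r1]; apply: B1; exists r.
    + by move=> _ _; exists 1; rewrite mul1r.
have A0 : A 0 by rewrite -(subrr (1 - g)); exact: (Asub).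
have Aadd : forall x y, A x -> A y -> A (x + y).
  move=> x y Ax Ay; rewrite -[y]opprK -[- y]add0r; apply: (Asub) => //.
  exact: (Asub).
have MA : maximal_left_ideal A.
  split; first by split.
  - exact: A1.
  - move=> N [N0 Nsub Nmul] N1 AN x Nx; apply: contrapT => nAx.
    apply: (Amax N); first by split => // sub; apply: nAx; exact: sub.
    by split => // y _; exact: AN.
have Agg := Jg A MA.
by apply: A1; rewrite -(subrK g 1); apply: (Aadd).
Qed.

Lemma central_unique (R : pzRingType) (J : R -> Prop) (e f : R) :
  ideal J -> (forall x, J x -> jacobson x) ->
  Defs.idempotent e -> Defs.idempotent f -> (forall r, e * r = r * e) ->
  (forall r, f * r = r * f) -> J (e - f) -> e = f.
Proof.
move=> [J0 Jsub Jl Jr] JJ ee ff ce cf Jef.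
have key : forall u v : R, u * u = u -> v * v = v -> (forall r, u * r = r * u) ->
    (forall r, v * r = r * v) -> J (u - v) -> u = u * v.
  move=> u v uu vv cu cv Juv.
  have h : u - u * v = 0.
    apply: jac_idem0; first by apply: JJ; rewrite -{1}uu -mulrBr; exact: Jl.
    have e3 : u * (u * v) = u * v by rewrite mulrA uu.
    have e1 : u * v * u = u * v by rewrite -mulrA -cu e3.
    have e2 : u * v * (u * v) = u * v by rewrite mulrA e1 -mulrA vv.
    by rewrite mulrBr !mulrBl e1 e2 e3 uu subrr subr0.
  by apply/eqP; rewrite -subr_eq0 h.
have h1 := key e f ee ff ce cf Jef.
have h2 : f = f * e.
  apply: key => //; rewrite -opprB -sub0r; exact: Jsub.
by rewrite {1}h1 ce -h2.
Qed.

Theorem lemma2p9 (R : pzRingType) (J : R -> Prop) :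
  ideal J -> (forall x, J x -> jacobson x) -> idempotents_lift J ->
  (abelian_ring R <-> abelian_mod J /\ idempotents_lift_uniquely J).
Proof.
move=> IJ JJ lift; have [J0 Jsub Jl Jr] := IJ.
have Jopp : forall x, J x -> J (- x) by move=> x Jx; rewrite -sub0r; exact: Jsub.
have Jadd : forall x y, J x -> J y -> J (x + y).
  by move=> x y Jx Jy; rewrite -[y]opprK; apply: Jsub => //; exact: Jopp.
split.
- move=> ab; split.
  + move=> a Ja r; have [e [ee Jea]] := lift a Ja.
    have -> : a * r - r * a = r * (e - a) - (e - a) * r.
      by rewrite mulrBr mulrBl (ab e ee r) opprB [_ + (_ - _)]addrC addrA subrK.
    by apply: Jsub; [apply: Jl | apply: Jr].
  + move=> a Ja; have [e [ee Jea]] := lift a Ja.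
    exists e; split => // f [ff Jfa].
    apply: (@central_unique R J e f IJ JJ) => //; try exact: ab.
    have -> : e - f = (e - a) - (f - a) by rewrite opprB addrA subrK.
    exact: Jsub.
- move=> [am uniq] e ee r.
  have J0e : J (e * e - e) by rewrite ee subrr.
  have Jc := am e J0e r.
  have [e' [_ U]] := uniq e J0e.
  have Ue : forall f, Defs.idempotent f -> J (f - e) -> f = e.
    move=> f ff Jf; rewrite -(U f (conj ff Jf)).
    by apply: U; split => //; rewrite subrr.
  have h1 : e + e * r * (1 - e) = e.
    apply: Ue.
    + have z : (1 - e) * e = 0 by rewrite mulrBl mul1r ee subrr.
      set x := e * r * (1 - e).
      have ex : e * x = x by rewrite /x !mulrA ee.
      have xe : x * e = 0 by rewrite /x -mulrA z mulr0.
      have xx : x * x = 0 by rewrite {2}/x !mulrA xe !mul0r.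
      by rewrite /Defs.idempotent mulrDr !mulrDl ee ex xe xx addr0 addr0.
    + have -> : e + e * r * (1 - e) - e = e * (e * r - r * e).
        by rewrite addrC addKr !mulrBr mulr1 !mulrA ee.
      exact: Jl.
  have h2 : e + (1 - e) * r * e = e.
    apply: Ue.
    + have z : e * (1 - e) = 0 by rewrite mulrBr mulr1 ee subrr.
      set y := (1 - e) * r * e.
      have ye : y * e = y by rewrite /y -mulrA ee.
      have ey : e * y = 0 by rewrite /y !mulrA z !mul0r.
      have yy : y * y = 0 by rewrite {1}/y -mulrA ey mulr0.
      by rewrite /Defs.idempotent mulrDr !mulrDl ee ye ey yy add0r addr0.
    + have -> : e + (1 - e) * r * e - e = (e * r - r * e) * (- e).
        by rewrite addrC addKr mulrN !mulrBl mul1r -!mulrA ee opprB.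
      exact: Jr.
  have k1 : e * r * (1 - e) = 0 by apply: (addrI e); rewrite addr0.
  have k2 : (1 - e) * r * e = 0 by apply: (addrI e); rewrite addr0.
  move/eqP: k1; rewrite mulrBr mulr1 subr_eq0 => /eqP k1.
  move/eqP: k2; rewrite !mulrBl !mul1r subr_eq0 => /eqP k2.
  by rewrite k1 k2.
Qed.
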